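(* Let $\mathcal V$ be a finite set, $2\le k\le|\mathcal V|-2$, let $\Gamma\subset\binom{\mathcal V}{k}$ be a code and let $G\le{\rm Aut}(\Gamma)\cap{\rm Sym}(\mathcal V)$. (a) $\Gamma$ is $G$-strongly incidence-transitive if and only if $\Gamma$ is $G$-incidence-transitive and $\delta(\Gamma)\ge2$. (b) If $\delta(\Gamma)\ge3$ and $\Gamma$ is $G$-neighbour-transitive, then $\Gamma$ is $G$-strongly incidence-transitive. (c) If $G$ is primitive on $\mathcal V$ and $\Gamma$ is $G$-strongly incidence-transitive, then $G$ is $2$-transitive on $\mathcal V$.
   Context: The Johnson graph $J(v,k)$ ($v=|\mathcal V|$) has vertex set $\binom{\mathcal V}{k}$, the $k$-subsets of $\mathcal V$, two being adjacent iff they meet in $k-1$ points; $d$ denotes graph distance. A code is a proper non-empty subset $\Gamma\subset\binom{\mathcal V}{k}$; $\delta(\Gamma)$ is the least distance in $J(v,k)$ between distinct codewords. The neighbour set $\Gamma_1$ is the set of $k$-subsets not in $\Gamma$ at distance $1$ from some codeword. ${\rm Aut}(\Gamma)$ is the setwise stabiliser of $\Gamma$ in ${\rm Aut}(J(v,k))$. For $\alpha\subseteq\mathcal V$, $\overline\alpha=\mathcal V\setminus\alpha$. For $G\le{\rm Aut}(\Gamma)$: $\Gamma$ is $G$-neighbour-transitive if $G$ is transitive on both $\Gamma$ and $\Gamma_1$; $\Gamma$ is $G$-incidence-transitive if $G$ is transitive on the set of pairs $(\gamma,\gamma_1)\in\Gamma\times\Gamma_1$ with $d(\gamma,\gamma_1)=1$.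 For $G\le{\rm Aut}(\Gamma)\cap{\rm Sym}(\mathcal V)$, $\Gamma$ is $G$-strongly incidence-transitive if $G$ is transitive on $\Gamma$ and, for $\gamma\in\Gamma$, the stabiliser $G_\gamma$ is transitive on $\gamma\times\overline\gamma$. *)

(* Defs.v *)
From mathcomp Require Import all_boot all_order all_fingroup all_solvable.
Set Implicit Arguments. Unset Strict Implicit. Unset Printing Implicit Defensive.

Section Johnson.
Variables (V : finType) (k : nat).

Definition ksubsets : {set {set V}} := [set A : {set V} | #|A| == k].

Definition jadj (A B : {set V}) : bool :=
  [&& #|A| == k, #|B| == k & #|A :&: B| == k.-1].

(* jwithin n A B  <=>  d(A,B) <= n in the graph J(v,k) (walks of length <= n) *)
Fixpoint jwithin (n : nat) (A B : {set V}) : bool :=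
  if n is m.+1 then (A == B) || [exists C, jadj A C && jwithin m C B]
  else A == B.

Definition is_code (Gam : {set {set V}}) : Prop :=
  Gam != set0 /\ Gam \proper ksubsets.

(* delta(Gam) >= m : distinct codewords are at distance >= m
   (vacuous, i.e. delta = infinity, when |Gam| = 1) *)
Definition min_dist_ge (Gam : {set {set V}}) (m : nat) : Prop :=
  forall A B, A \in Gam -> B \in Gam -> A != B -> ~~ jwithin m.-1 A B.

Definition neighbours (Gam : {set {set V}}) : {set {set V}} :=
  [set B in ksubsets | (B \notin Gam) && [exists A in Gam, jadj A B]].

Definition pim (g : {perm V}) (A : {set V}) : {set V} := [set g x | x in A].

Definition stabilises (G : {group {perm V}}) (Gam : {set {set V}}) : Prop :=
  forall g, g \in G -> [set pim g A | A : {set V} in Gam] = Gam.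

Definition set_transitive (G : {group {perm V}}) (S : {set {set V}}) : Prop :=
  forall A B, A \in S -> B \in S -> exists2 g, g \in G & pim g A = B.

Definition neighbour_transitive (G : {group {perm V}}) (Gam : {set {set V}}) : Prop :=
  set_transitive G Gam /\ set_transitive G (neighbours Gam).

Definition incidence_transitive (G : {group {perm V}}) (Gam : {set {set V}}) : Prop :=
  forall A A1 B B1,
    A \in Gam -> A1 \in neighbours Gam -> jadj A A1 ->
    B \in Gam -> B1 \in neighbours Gam -> jadj B B1 ->
    exists2 g, g \in G &
      pim g A = B /\ pim g A1 = B1.

Definition strongly_incidence_transitive (G : {group {perm V}}) (Gam : {set {set V}}) : Prop :=
  set_transitive G Gam /\
  forall A, A \in Gam ->
    forall x x' y y', x \in A -> x' \in A -> y \in ~: A -> y' \in ~: A ->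
      exists2 g, g \in G &
        [/\ pim g A = A, g x = x' & g y = y'].

End Johnson.

(* Main.v *)
Require Import Defs.
From mathcomp Require Import all_boot all_order all_fingroup all_solvable.
From mathcomp Require Import zify.
Set Implicit Arguments. Unset Strict Implicit. Unset Printing Implicit Defensive.

Section Helpers.
Variable V : finType.
Implicit Types (A B C : {set V}) (g h : {perm V}) (x y z : V).

Lemma mem_pim g A z : (z \in pim g A) = ((g^-1)%g z \in A).
Proof.
by rewrite -{1}(permKV g z) /pim mem_imset //; apply: perm_inj.
Qed.

Lemma mem_pim_f g A z : (g z \in pim g A) = (z \in A).
Proof. by rewrite /pim mem_imset //; apply: perm_inj. Qed.

Lemma card_pim g A : #|pim g A| = #|A|.
Proof. by rewrite /pim card_imset //; apply: perm_inj. Qed.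

Lemma pimM g h A : pim (g * h)%g A = pim h (pim g A).
Proof. by apply/setP=> z; rewrite !mem_pim invMg permM. Qed.

Lemma pimI g A B : pim g (A :&: B) = pim g A :&: pim g B.
Proof. by apply/setP=> z; rewrite !(inE, mem_pim). Qed.

Lemma pimK g A : pim (g^-1)%g (pim g A) = A.
Proof. by apply/setP=> z; rewrite !mem_pim invgK permK. Qed.

Lemma pim_inj g : injective (pim g).
Proof. by move=> A B e; rewrite -(pimK g A) e pimK. Qed.

Definition sw A x y := y |: (A :\ x).

Lemma mem_sw A x y z : (z \in sw A x y) = (z == y) || ((z != x) && (z \in A)).
Proof. by rewrite /sw !inE. Qed.

Lemma pim_sw g A x y : pim g (sw A x y) = sw (pim g A) (g x) (g y).
Proof.
apply/setP=> z; rewrite !(mem_sw, mem_pim).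
by rewrite -!(can2_eq (permKV g) (permK g)).
Qed.

Lemma jadj_pim k g A B : jadj k (pim g A) (pim g B) = jadj k A B.
Proof. by rewrite /jadj -pimI !card_pim. Qed.

Lemma jadj_sym k A B : jadj k A B = jadj k B A.
Proof. by rewrite /jadj setIC andbCA. Qed.

Lemma card_sw A x y : x \in A -> y \notin A -> #|sw A x y| = #|A|.
Proof.
move=> xA yA; rewrite /sw cardsU1 (cardsD1 x A) xA !inE.
by rewrite (negbTE yA) andbF.
Qed.

Lemma sw_adj k A x y : #|A| = k -> x \in A -> y \notin A -> jadj k A (sw A x y).
Proof.
move=> cA xA yA; rewrite /jadj card_sw // cA eqxx /=.
have -> : A :&: sw A x y = A :\ x.
  apply/setP=> z; rewrite !inE; have [->|_] := eqVneq z y.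
    by rewrite (negbTE yA) andbF.
  by case: (z \in A); rewrite ?andbT ?andbF.
by apply/eqP; have := cardsD1 x A; rewrite xA cA; lia.
Qed.

Lemma sw_neq A x y : y \notin A -> sw A x y != A.
Proof.
move=> yA; apply: contraNneq yA => <-; by rewrite mem_sw eqxx.
Qed.

Lemma adj_sw k A B : 1 <= k -> jadj k A B ->
  exists x, exists y, [/\ x \in A, y \notin A & B = sw A x y].
Proof.
move=> k1 /and3P[/eqP cA /eqP cB /eqP cI].
have c1 : #|A :\: B| == 1 by rewrite cardsD cA cI; apply/eqP; lia.
have c2 : #|B :\: A| == 1 by rewrite cardsD cB setIC cI; apply/eqP; lia.
case/cards1P: c1 => x ex; case/cards1P: c2 => y ey.
have hx : forall z, (z \in A) && (z \notin B) = (z == x).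
  by move=> z; rewrite -in_set1 -ex inE andbC.
have hy : forall z, (z \in B) && (z \notin A) = (z == y).
  by move=> z; rewrite -in_set1 -ey inE andbC.
have xA : x \in A by have := hx x; rewrite eqxx => /andP[].
have yA : y \notin A by have := hy y; rewrite eqxx => /andP[].
exists x, y; split => //; apply/setP=> z; rewrite mem_sw.
have := hx z; have := hy z.
case: (z \in A); case: (z \in B); case: (z == y); case: (z == x) => //=.
Qed.

Lemma sw_extract g A A' x y x' y' : x \in A -> y \notin A -> x' \in A' -> y' \notin A' ->
  pim g A = A' -> pim g (sw A x y) = sw A' x' y' -> g x = x' /\ g y = y'.
Proof.
move=> xA yA xA' yA' eA esw; split.
  have : x' \in pim g A by rewrite eA.
  rewrite mem_pim => uA.
  have : x' \notin sw A' x' y'.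
    rewrite mem_sw eqxx /= ?orbF; apply/eqP => e; by move: yA'; rewrite -e xA'.
  rewrite -esw mem_pim mem_sw uA andbT negb_or negbK => /andP[_ /eqP <-].
  by rewrite permKV.
have : g y \in sw A' x' y' by rewrite -esw mem_pim_f mem_sw eqxx.
rewrite mem_sw -eA mem_pim_f (negbTE yA) andbF orbF.
by move/eqP.
Qed.

Lemma jwithinS k n A B : jwithin k n A B -> jwithin k n.+1 A B.
Proof.
elim: n A => [|n IH] A /=.
  move=> ->; done.
case/orP=> [->//|/existsP[C /andP[aC wC]]].
apply/orP; right; apply/existsP; exists C; rewrite aC; exact: IH.
Qed.

Lemma jadj_within1 k A B : jadj k A B -> jwithin k 1 A B.
Proof. by move=> aB /=; apply/orP; right; apply/existsP; exists B; rewrite aB eqxx. Qed.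

Lemma jadj_within2 k A B C : jadj k A B -> jadj k B C -> jwithin k 2 A C.
Proof.
move=> aB bC /=; apply/orP; right; apply/existsP; exists B; rewrite aB /=.
by apply/orP; right; apply/existsP; exists C; rewrite bC eqxx.
Qed.

End Helpers.
Section Main.
Variables (V : finType) (k : nat) (Gam : {set {set V}}) (G : {group {perm V}}).
Hypotheses (k2 : 2 <= k) (kV : k + 2 <= #|V|) (code : is_code k Gam) (stab : stabilises G Gam).

Lemma inGk A : A \in Gam -> #|A| = k.
Proof.
move=> AG; case: code => _ /properP[/subsetP s _].
by have := s A AG; rewrite inE => /eqP.
Qed.

Lemma pimG g A : g \in G -> A \in Gam -> pim g A \in Gam.
Proof. by move=> gG AG; rewrite -(stab gG); apply: imset_f. Qed.

Lemma ex_in_out A : A \in Gam -> exists x, exists y, x \in A /\ y \notin A.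
Proof.
move=> AG; have cA := inGk AG.
have /card_gt0P[x xA] : 0 < #|A| by rewrite cA; lia.
have /card_gt0P[y yA] : 0 < #|~: A| by have := cardsC A; rewrite cA; lia.
by exists x, y; split => //; rewrite inE in yA.
Qed.

Lemma transport A A' x y x' y' : strongly_incidence_transitive G Gam ->
  A \in Gam -> A' \in Gam -> x \in A -> y \notin A -> x' \in A' -> y' \notin A' ->
  exists2 g, g \in G & [/\ pim g A = A', g x = x' & g y = y'].
Proof.
move=> [tr st] AG A'G xA yA xA' yA'.
have [h hG eh] := tr _ _ AG A'G.
have hx : h x \in A' by rewrite -eh mem_pim_f.
have hy : h y \in ~: A' by rewrite inE -eh mem_pim_f.
have hy' : y' \in ~: A' by rewrite inE.
have [g gG [eg gx gy]] := st _ A'G _ _ _ _ hx xA' hy hy'.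
exists (h * g)%g; first by rewrite groupM.
by rewrite pimM eh eg !permM gx gy.
Qed.

Lemma nb_sw A x y : min_dist_ge k Gam 2 -> A \in Gam -> x \in A -> y \notin A ->
  sw A x y \in neighbours k Gam.
Proof.
move=> md AG xA yA; have ad := sw_adj (inGk AG) xA yA.
rewrite inE; apply/andP; split.
  by rewrite inE card_sw // inGk.
apply/andP; split; last by apply/existsP; exists A; rewrite AG.
apply/negP => sG.
have := md _ _ AG sG; rewrite eq_sym (sw_neq x yA) => /(_ isT).
by rewrite (jadj_within1 ad).
Qed.

Lemma closure_all : (forall A x y, A \in Gam -> x \in A -> y \notin A -> sw A x y \in Gam) ->
  False.
Proof.
move=> cl.
have main : forall n (A C : {set V}), A \in Gam -> #|C| = #|A| -> #|C :\: A| <= n -> C \in Gam.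
  elim=> [|n IH] A C AG cC.
    rewrite leqn0 cards_eq0 => /eqP e.
    have : C \subset A by rewrite -setD_eq0 e.
    move=> sCA; have : C == A by rewrite eqEcard sCA /= -cC.
    by move/eqP ->.
  have [e|] := eqVneq (C :\: A) set0.
    move=> _; have : C \subset A by rewrite -setD_eq0 e.
    move=> sCA; have : C == A by rewrite eqEcard sCA /= -cC.
    by move/eqP ->.
  case/set0Pn=> y; rewrite inE => /andP[yA yC] cn.
  have : 0 < #|A :\: C|.
    have := cardsD A C; have := cardsD C A; rewrite setIC.
    have : 0 < #|C :\: A| by apply/card_gt0P; exists y; rewrite inE yA yC.
    lia.
  case/card_gt0P=> x; rewrite inE => /andP[xC xA].
  have A'G := cl _ _ _ AG xA yA.
  apply: (IH _ _ A'G); first by rewrite card_sw.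
  have : C :\: sw A x y \proper C :\: A.
    rewrite properE; apply/andP; split.
      apply/subsetP=> z; rewrite !in_setD mem_sw negb_or negb_and negbK.
      case/andP=> /andP[_ /orP[/eqP zx|zA]] zC.
        by move: xC; rewrite -zx zC.
      by rewrite zA zC.
    apply/subsetPn; exists y; first by rewrite inE yA yC.
    by rewrite in_setD mem_sw eqxx.
  move/proper_card; lia.
case: code => /set0Pn[A AG] /properP[_ [C CK CG]].
case/negP: CG; apply: (main #|V| A) => //.
  by rewrite (inGk AG); rewrite inE in CK; apply/eqP.
exact: max_card.
Qed.


Lemma partA1 : strongly_incidence_transitive G Gam -> incidence_transitive k G Gam.
Proof.
move=> sit A A1 B B1 AG _ aA1 BG _ aB1.
have [x [y [xA yA ->]]] := adj_sw (ltnW k2) aA1.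
have [x' [y' [xB yB ->]]] := adj_sw (ltnW k2) aB1.
have [g gG [eg gx gy]] := transport sit AG BG xA yA xB yB.
by exists g => //; rewrite pim_sw eg gx gy.
Qed.

Lemma partA2 : strongly_incidence_transitive G Gam -> min_dist_ge k Gam 2.
Proof.
move=> sit A B AG BG nAB /=; apply/negP => /orP[/eqP eAB|/existsP[C /andP[aC /eqP eCB]]].
  by rewrite eAB eqxx in nAB.
subst C.
have [x [y [xA yA eB]]] := adj_sw (ltnW k2) aC.
apply: closure_all => A' x' y' A'G xA' yA'.
have [g gG [eg gx gy]] := transport sit AG A'G xA yA xA' yA'.
by rewrite -eg -gx -gy -pim_sw -eB pimG.
Qed.

Lemma partA3 : incidence_transitive k G Gam -> min_dist_ge k Gam 2 ->
  strongly_incidence_transitive G Gam.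
Proof.
move=> it md; split.
  move=> A B AG BG.
  have [x [y [xA yA]]] := ex_in_out AG.
  have [x' [y' [xB yB]]] := ex_in_out BG.
  have [g gG [eg _]] := it _ _ _ _ AG (nb_sw md AG xA yA) (sw_adj (inGk AG) xA yA)
     BG (nb_sw md BG xB yB) (sw_adj (inGk BG) xB yB).
  by exists g.
move=> A AG x x' y y' xA xA' yA yA'; rewrite inE in yA; rewrite inE in yA'.
have [g gG [eg e2]] := it _ _ _ _ AG (nb_sw md AG xA yA) (sw_adj (inGk AG) xA yA)
     AG (nb_sw md AG xA' yA') (sw_adj (inGk AG) xA' yA').
have [gx gy] := sw_extract xA yA xA' yA' eg e2.
by exists g.
Qed.

Lemma partB : min_dist_ge k Gam 3 -> neighbour_transitive k G Gam ->
  strongly_incidence_transitive G Gam.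
Proof.
move=> md3 [trG trN].
have md : min_dist_ge k Gam 2.
  move=> A B AG BG nAB; apply: contra (md3 _ _ AG BG nAB); exact: jwithinS.
split => // A AG x x' y y' xA xA' yA yA'; rewrite inE in yA; rewrite inE in yA'.
have [g gG e2] := trN _ _ (nb_sw md AG xA yA) (nb_sw md AG xA' yA').
have eg : pim g A = A.
  apply/eqP; apply: contraT => ne.
  have a1 : jadj k A (sw A x' y') := sw_adj (inGk AG) xA' yA'.
  have a2 : jadj k (sw A x' y') (pim g A).
    by rewrite jadj_sym -e2 jadj_pim sw_adj // inGk.
  have := md3 _ _ AG (pimG gG AG); rewrite eq_sym ne => /(_ isT).
  by move=> H; case/negP: H; exact: (jadj_within2 a1 a2).
have [gx gy] := sw_extract xA yA xA' yA' eg e2.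
by exists g.
Qed.


Lemma PactE (g : {perm V}) y : 'P%act y g = g y.
Proof. by []. Qed.

Definition SS x := [set C in Gam | x \in C].

Lemma SS_sub g x : g \in G -> [set pim g C | C in SS x] \subset SS (g x).
Proof.
move=> gG; apply/subsetP=> _ /imsetP[C CS ->]; move: CS; rewrite !inE => /andP[CG xC].
by rewrite pimG // mem_pim_f.
Qed.

Lemma SS_le g x : g \in G -> #|SS x| <= #|SS (g x)|.
Proof.
move=> gG; have := subset_leq_card (SS_sub x gG).
by rewrite card_imset //; apply: pim_inj.
Qed.

Lemma SS_eqcard : [transitive G, on [set: V] | 'P] -> forall x y, #|SS x| = #|SS y|.
Proof.
move=> trG x y; have [g gG] := atransP2 trG (in_setT x) (in_setT y).
move=> ey; apply/eqP; rewrite eqn_leq; apply/andP; split.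
  by rewrite ey SS_le.
have : x = (g^-1)%g y by rewrite ey permK.
by move=> ->; rewrite SS_le // groupV.
Qed.

Lemma SS_im (trG : [transitive G, on [set: V] | 'P]) g x : g \in G ->
  SS (g x) = [set pim g C | C in SS x].
Proof.
move=> gG; apply/eqP; rewrite eq_sym eqEcard SS_sub //=.
by rewrite card_imset ?(SS_eqcard trG x (g x)) //; apply: pim_inj.
Qed.

Lemma prim_SS : [primitive G, on [set: V] | 'P] -> forall a b, SS a = SS b -> a = b.
Proof.
move=> prim a b eab; have trG : [transitive G, on [set: V] | 'P] by case/andP: prim.
pose X := [set y | SS y == SS a].
have inN : forall g, g \in G -> SS (g a) = SS a -> g \in ('N_G(X | 'P))%g.
  move=> g gG ega; rewrite inE gG /=; apply/astabsP => y.
  rewrite PactE !inE (SS_im trG _ gG) -{1}ega (SS_im trG _ gG).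
  by rewrite (inj_eq (imset_inj (@pim_inj _ g))).
move: prim; rewrite (trans_prim_astab (in_setT a) trG) => /maximal_eqP[_ mx].
have sub1 : ('C_G[a | 'P])%g \subset ('N_G(X | 'P))%g.
  apply/subsetP=> g /setIP[gG /astab1P]; rewrite PactE => ga.
  by apply: inN => //; rewrite ga.
case: (mx ('N_G(X | 'P))%G sub1 (subsetIl _ _)) => eH.
  have [g gG ebg] := atransP2 trG (in_setT a) (in_setT b).
  rewrite PactE in ebg.
  have : g \in ('N_G(X | 'P))%G by apply: inN => //; rewrite -ebg.
  by rewrite eH => /setIP[_ /astab1P]; rewrite PactE ebg.
exfalso.
have allX : forall y, SS y = SS a.
  move=> y; have [g gG ey] := atransP2 trG (in_setT a) (in_setT y).
  have : g \in ('N_G(X | 'P))%G by rewrite eH.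
  move=> /setIP[_ /astabsP/(_ a)]; rewrite !inE eqxx -ey => /eqP //.
case: code => /set0Pn[C CG] _.
have [c [d [cC dC]]] := ex_in_out CG.
have : C \in SS d by rewrite allX -(allX c) inE CG cC.
by rewrite inE (negbTE dC) andbF.
Qed.

Lemma sepC : [primitive G, on [set: V] | 'P] -> forall a b, a != b ->
  exists C, [/\ C \in Gam, a \in C & b \notin C].
Proof.
move=> prim a b nab; have trG : [transitive G, on [set: V] | 'P] by case/andP: prim.
have [/subsetPn[C Ca Cb]|sab] := boolP (~~ (SS a \subset SS b)).
  move: Ca Cb; rewrite !inE => /andP[CG aC]; rewrite CG /= => bC.
  by exists C.
rewrite negbK in sab.
have : SS a == SS b by rewrite eqEcard sab (SS_eqcard trG b a) /=.
by move/eqP/(prim_SS prim)/eqP; rewrite (negbTE nab).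
Qed.

Lemma partC : [primitive G, on [set: V] | 'P] -> strongly_incidence_transitive G Gam ->
  [transitive^2 G, on [set: V] | 'P].
Proof.
move=> prim sit; have trG : [transitive G, on [set: V] | 'P] by case/andP: prim.
case: code => /set0Pn[C0 C0G] _.
have [a0 [b0 [aC0 bC0]]] := ex_in_out C0G.
have nab0 : a0 != b0 by apply: contraNneq bC0 => <-.
apply/imsetP; exists [tuple a0; b0].
  by rewrite inE /= inE nab0 /=; apply/subsetP=> z _; exact: in_setT.
apply/setP=> t; apply/idP/idP.
  case/tupleP: t => c t; case/tupleP: t => d t; rewrite (tuple0 t).
  rewrite inE /= inE andbT => /andP[ncd _].
  have [C [CG cC dC]] := sepC prim ncd.
  have [g gG [_ gc gd]] := transport sit C0G CG aC0 bC0 cC dC.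
  apply/imsetP; exists g => //; apply: val_inj => /=.
  by rewrite !PactE gc gd.
case/imsetP=> g gG ->; apply: n_act_dtuple.
  exact: (subsetP (atrans_acts trG) g gG).
by rewrite inE /= inE nab0 /=; apply/subsetP=> z _; exact: in_setT.
Qed.

End Main.

Theorem theorem1p3 (V : finType) (k : nat) (Gam : {set {set V}})
    (G : {group {perm V}}) :
  2 <= k -> k + 2 <= #|V| ->
  is_code k Gam -> stabilises G Gam ->
  [/\ (strongly_incidence_transitive G Gam <->
         incidence_transitive k G Gam /\ min_dist_ge k Gam 2),
      (min_dist_ge k Gam 3 -> neighbour_transitive k G Gam ->
         strongly_incidence_transitive G Gam)
    & ([primitive G, on [set: V] | 'P] -> strongly_incidence_transitive G Gam ->
         [transitive^2 G, on [set: V] | 'P])].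
Proof.
move=> k2 kV code stab; split.
- split.
    move=> sit; split; [exact: (partA1 k2 sit) | exact: (partA2 k2 kV code stab sit)].
  by case=> it md; exact: (partA3 k2 kV code it md).
- by move=> md nt; exact: (partB code stab md nt).
by move=> prim sit; exact: (partC k2 kV code stab prim sit).
Qed.
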